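(* Let $N\ge1$. The composition of $\psi$ (restricted to $\bar\Gamma(2)_2=[\bar\Gamma(2),\bar\Gamma(2)]$) with reduction $\mathbb{Z}^3\to(\mathbb{Z}/N'\mathbb{Z})^3$ extends to a group homomorphism $\bar\psi:\Phi_N\to(\mathbb{Z}/N'\mathbb{Z})^3$ which vanishes on $A^N$ and $B^N$ and satisfies, for $\gamma\in\bar\Gamma(2)$ and $\delta\in\Phi_N$, $$\bar\psi(\gamma\delta\gamma^{-1})=(-\bar\phi_1(\gamma)\bar\phi_2(\delta),0)+\bar\psi(\delta).$$ In particular, for $i,j,k\in\mathbb{Z}$, $\bar\psi(A^iB^jC^kB^{-j}A^{-i})=(-ik,-jk,k)$.
   Context: Let $\bar\Gamma(2)=\Gamma(2)/\{\pm1\}\subset\mathrm{PSL}_2(\mathbb{Z})$, freely generated by the classes $A$ of $\begin{pmatrix}1&2\\0&1\end{pmatrix}$ and $B$ of $\begin{pmatrix}1&0\\2&1\end{pmatrix}$; $[g,h]=ghg^{-1}h^{-1}$, $C=[A,B]$; $\bar\Gamma(2)_1=\bar\Gamma(2)$, $\bar\Gamma(2)_{k+1}=[\bar\Gamma(2)_k,\bar\Gamma(2)]$. Let $\psi:\bar\Gamma(2)_2\to\mathbb{Z}^3$ be the homomorphism with kernel $\bar\Gamma(2)_4$ inducing the isomorphism $\bar\Gamma(2)_2/\bar\Gamma(2)_4\cong\mathbb{Z}^3$ that sends $C\mapsto(0,0,1)$, $[C,A]\mapsto(1,0,0)$, $[C,B]\mapsto(0,1,0)$. Set $N'=N$ if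 $N$ is odd and $N'=N/2$ if $N$ is even. $\Phi_N$ is the kernel of $\bar\phi_1:\bar\Gamma(2)\to(\mathbb{Z}/N\mathbb{Z})^2$, $A\mapsto(1,0)$, $B\mapsto(0,1)$. $\bar\phi_2:\Phi_N\to\mathbb{Z}/N'\mathbb{Z}$ is the homomorphism vanishing on $A^N$ and $B^N$ and taking the value $1$ on each $A^iB^jCB^{-j}A^{-i}$ ($i,j\in\mathbb{Z}$). The product $\bar\phi_1(\gamma)\bar\phi_2(\delta)$ is computed in $(\mathbb{Z}/N'\mathbb{Z})^2$ (using $N'\mid N$), and $(v,0)$ denotes the element of $(\mathbb{Z}/N'\mathbb{Z})^3$ with first two coordinates $v$ and last coordinate $0$. *)

(* Defs.v *)
(* Gamma-bar(2) is realized concretely inside PSL_2(Z):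
   an element of PSL_2(Z) congruent to the identity mod 2 has an odd (hence
   nonzero) upper-left entry, so we represent its class by the unique lift
   M in SL_2(Z) with M 0 0 > 0.  The group law is matrix product followed by
   this sign normalization. *)
From mathcomp Require Import all_boot all_order all_algebra.
Set Implicit Arguments. Unset Strict Implicit. Unset Printing Implicit Defensive.
Import Order.TTheory GRing.Theory Num.Theory.
Local Open Scope ring_scope.

Definition mat := 'M[int]_2.

Definition i0 : 'I_2 := ord0.
Definition i1 : 'I_2 := ord_max.

Definition normalize (M : mat) : mat := if M i0 i0 < 0 then - M else M.

Definition gmul (M N : mat) : mat := normalize (M *m N).
Definition ginv (M : mat) : mat := normalize (\adj M).
Definition gone : mat := 1%:M.

Definition inG (M : mat) : Prop :=
  \det M = 1 /\ (forall i j : 'I_2, (M i j = (i == j)%:R %[mod 2])%Z) /\ 0 < M i0 i0.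

Definition Am : mat := \matrix_(i, j) ((i == j)%:R + ((i == i0) && (j == i1))%:R * 2).
Definition Bm : mat := \matrix_(i, j) ((i == j)%:R + ((i == i1) && (j == i0))%:R * 2).

Definition comm (g h : mat) : mat := gmul (gmul (gmul g h) (ginv g)) (ginv h).
Definition Cm : mat := comm Am Bm.

Definition gpow (g : mat) (k : int) : mat :=
  match k with
  | Posz n => iter n (gmul g) gone
  | Negz n => iter n.+1 (gmul (ginv g)) gone
  end.

Inductive gen (S : mat -> Prop) : mat -> Prop :=
  | gen_in x : S x -> gen S x
  | gen_one : gen S gone
  | gen_mul x y : gen S x -> gen S y -> gen S (gmul x y)
  | gen_inv x : gen S x -> gen S (ginv x).

(* lcs k = Gamma-bar(2)_{k+1} *)
Fixpoint lcs (k : nat) : mat -> Prop :=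
  match k with
  | 0 => inG
  | k'.+1 => gen (fun x => exists g h, lcs k' g /\ inG h /\ x = comm g h)
  end.

Definition Gamma (k : nat) : mat -> Prop := lcs k.-1.

Definition Nprime (N : nat) : nat := if odd N then N else N./2.

Definition add2 (u v : int * int) : int * int := (u.1 + v.1, u.2 + v.2).
Definition add3 (u v : int * int * int) : int * int * int :=
  (u.1.1 + v.1.1, u.1.2 + v.1.2, u.2 + v.2).

Definition eqm (n : nat) (x y : int) : Prop := (x = y %[mod n%:Z])%Z.
Definition eq2m (n : nat) (u v : int * int) : Prop := eqm n u.1 v.1 /\ eqm n u.2 v.2.
Definition eq3m (n : nat) (u v : int * int * int) : Prop :=
  eqm n u.1.1 v.1.1 /\ eqm n u.1.2 v.1.2 /\ eqm n u.2 v.2.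

Definition PhiN (N : nat) (phi1 : mat -> int * int) (x : mat) : Prop :=
  inG x /\ eq2m N (phi1 x) (0, 0).

(* Main.v *)
From HB Require Import structures.
Require Import Defs.
From mathcomp Require Import all_boot all_order all_algebra.
From mathcomp Require Import zify.
Import Order.TTheory GRing.Theory Num.Theory.
Set Implicit Arguments. Unset Strict Implicit. Unset Printing Implicit Defensive.
Local Open Scope ring_scope.

Section GenDefs.
Variable G : groupType.
Local Open Scope group_scope.

Inductive genG (S : G -> Prop) : G -> Prop :=
  | genG_in x : S x -> genG S x
  | genG_one : genG S 1
  | genG_mul x y : genG S x -> genG S y -> genG S (x * y)
  | genG_inv x : genG S x -> genG S x^-1.

Definition cm (x y : G) : G := x * y * x^-1 * y^-1.

Ltac gn := repeat progress rewrite ?invgM ?invgK ?mulgA ?mulgK ?mulgVK ?mulg1 ?mul1g ?invg1 ?mulgV ?mulVg.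

Lemma cmV x y : (cm x y)^-1 = cm y x.
Proof. rewrite /cm; gn. by []. Qed.

Lemma cmM1 x y z : cm (x * y) z = x * cm y z * x^-1 * cm x z.
Proof. rewrite /cm; gn. by []. Qed.
Lemma cmM2 x y z : cm x (y * z) = cm x y * (y * cm x z * y^-1).
Proof. rewrite /cm; gn. by []. Qed.
Lemma cmV1 x y : cm x^-1 y = x^-1 * (cm x y)^-1 * x^-1^-1.
Proof. rewrite /cm; gn. by []. Qed.
Lemma cmV2 x y : cm x y^-1 = y^-1 * (cm x y)^-1 * y^-1^-1.
Proof. rewrite /cm; gn. by []. Qed.
Lemma conj_cm g x y : g * cm x y * g^-1 = cm (g * x * g^-1) (g * y * g^-1).
Proof. rewrite /cm; gn. by []. Qed.
Lemma conjE g c : g * c * g^-1 = cm g c * c.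
Proof. rewrite /cm; gn. by []. Qed.
Lemma cm1 x : cm x 1 = 1. Proof. rewrite /cm; gn; by []. Qed.
Lemma cm1l x : cm 1 x = 1. Proof. rewrite /cm; gn; by []. Qed.
Lemma cmxx x : cm x x = 1. Proof. rewrite /cm; gn; by []. Qed.

End GenDefs.

Lemma triple_eq (u v : int * int * int) :
  u = v <-> [/\ u.1.1 = v.1.1, u.1.2 = v.1.2 & u.2 = v.2].
Proof.
split=> [->//|[]]; case: u => [[? ?] ?]; case: v => [[? ?] ?] /= -> -> -> //.
Qed.

Ltac d3 H := let x := fresh "E" in let y := fresh "E" in let z := fresh "E" in
  move/triple_eq: H => /= [x y z].
Ltac g3 := apply/triple_eq => /=; split; lia.

Lemma dvL (d x y e : int) (p q : int) : (d %| x)%Z -> (d %| y)%Z ->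
  e = (p * x + q * y)%R -> (d %| e)%Z.
Proof. by move=> Hx Hy ->; rewrite rpredD // dvdz_mull. Qed.

Lemma dvL3 (d x y z e : int) (p q r : int) : (d %| x)%Z -> (d %| y)%Z -> (d %| z)%Z ->
  e = (p * x + q * y + r * z)%R -> (d %| e)%Z.
Proof. by move=> Hx Hy Hz ->; rewrite !rpredD // dvdz_mull. Qed.

Lemma eqmP n x y : eqm n x y <-> (n%:Z %| x - y)%Z.
Proof. rewrite /eqm -eqz_mod_dvd; split=> [->//|/eqP//]. Qed.

Lemma Np_dvd N : (Posz (Nprime N) %| Posz N)%Z.
Proof.
rewrite dvdzE /= /Nprime; case: ifP => // /negbT Ho.
rewrite -{2}(odd_double_half N) (negbTE Ho) add0n -muln2; exact: dvdn_mulr.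
Qed.

Lemma half_dvd N (m x y : int) : (Posz N %| m)%Z -> (2 * x = m * y)%R ->
  (Posz (Nprime N) %| x)%Z.
Proof.
rewrite /Nprime; case: ifP => Ho Hm Hxy.
- have Hc : coprimez (Posz N) 2 by rewrite coprimezE /= coprimen2.
  rewrite -(Gauss_dvdzl _ Hc) mulrC Hxy; exact: dvdz_mulr.
- case/dvdzP: Hm => k Hk.
  have HN : N = (N./2 * 2)%N by rewrite -{1}(odd_double_half N) Ho add0n muln2.
  apply/dvdzP; exists (k * y)%R.
  move: Hxy; rewrite Hk {1}HN PoszM; lia.
Qed.

Lemma int_ind2 (P : int -> Prop) : P 0%R -> (forall n, P n -> P (n + 1)%R) ->
  (forall n, P n -> P (n - 1)%R) -> forall n, P n.
Proof.
move=> H0 HS HP [k|k].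
- elim: k => [//|k IH]; have := HS _ IH.
  by have -> : (Posz k + 1 = Posz k.+1)%R by lia.
- elim: k => [|k IH]; first by have := HP _ H0.
  have := HP _ IH; by have -> : (Negz k - 1 = Negz k.+1)%R by lia.
Qed.

Section Abs.
Variable G : groupType.
Local Open Scope group_scope.
Ltac gn := repeat progress rewrite ?invgM ?invgK ?mulgA ?mulgK ?mulgVK ?mulg1 ?mul1g ?invg1 ?mulgV ?mulVg.

Variables a b : G.
Hypothesis Hgen : forall x, genG (fun y => y = a \/ y = b) x.
Definition Gam2 (z : G) := genG (fun x : G => exists g h, x = cm g h) z.
Definition Gam3 (z : G) := genG (fun x : G => exists g h, Gam2 g /\ x = cm g h) z.
Definition Gam4 (z : G) := genG (fun x : G => exists g h, Gam3 g /\ x = cm g h) z.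
Definition C := cm a b.

Variable psi : G -> int * int * int.
Hypothesis Hhom : forall x y, Gam2 x -> Gam2 y -> psi (x * y) = add3 (psi x) (psi y).
Hypothesis Hker : forall x, Gam4 x -> psi x = (0, 0, 0)%R.
Hypothesis HC : psi C = (0, 0, 1)%R.
Hypothesis HCA : psi (cm C a) = (1, 0, 0)%R.
Hypothesis HCB : psi (cm C b) = (0, 1, 0)%R.

Lemma genG_normal (S : G -> Prop) : (forall g x, S x -> genG S (g * x * g^-1)) ->
  forall g x, genG S x -> genG S (g * x * g^-1).
Proof.
move=> HS g x; elim=> {x}.
- by move=> x /HS.
- rewrite mulg1 mulgV; exact: genG_one.
- move=> x y _ Hx _ Hy.
  have->: g * (x * y) * g^-1 = (g * x * g^-1) * (g * y * g^-1) by gn.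
  by apply: genG_mul.
- move=> x _ Hx.
  have->: g * x^-1 * g^-1 = (g * x * g^-1)^-1 by gn.
  by apply: genG_inv.
Qed.

Lemma Gam2_cm g h : Gam2 (cm g h).
Proof. apply: genG_in; by exists g, h. Qed.

Lemma Gam2_normal g x : Gam2 x -> Gam2 (g * x * g^-1).
Proof.
apply: genG_normal => {}g {}x [u [v ->]]; rewrite conj_cm; exact: Gam2_cm.
Qed.

Lemma Gam3_normal g x : Gam3 x -> Gam3 (g * x * g^-1).
Proof.
apply: genG_normal => {}g {}x [u [v [Hu ->]]]; rewrite conj_cm.
apply: genG_in; do 2 eexists; split; last reflexivity; exact: Gam2_normal.
Qed.

Lemma Gam4_normal g x : Gam4 x -> Gam4 (g * x * g^-1).
Proof.
apply: genG_normal => {}g {}x [u [v [Hu ->]]]; rewrite conj_cm.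
apply: genG_in; do 2 eexists; split; last reflexivity; exact: Gam3_normal.
Qed.

Lemma Gam32 x : Gam3 x -> Gam2 x.
Proof.
elim=> {x}; try by constructor.
move=> x [u [v [_ ->]]]; exact: Gam2_cm.
Qed.

Lemma Gam43 x : Gam4 x -> Gam3 x.
Proof.
elim=> {x}; try by constructor.
move=> x [u [v [Hu ->]]]; apply: genG_in; exists u, v; split=> //; exact: Gam32.
Qed.

Lemma Gam3_cml x y : Gam2 x -> Gam3 (cm x y).
Proof. by move=> Hx; apply: genG_in; exists x, y. Qed.
Lemma Gam3_cmr x y : Gam2 x -> Gam3 (cm y x).
Proof. by move=> Hx; rewrite -cmV; apply: genG_inv; apply: Gam3_cml. Qed.
Lemma Gam4_cml x y : Gam3 x -> Gam4 (cm x y).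
Proof. by move=> Hx; apply: genG_in; exists x, y. Qed.
Lemma Gam4_cmr x y : Gam3 x -> Gam4 (cm y x).
Proof. by move=> Hx; rewrite -cmV; apply: genG_inv; apply: Gam4_cml. Qed.

Lemma Gam2_1 : Gam2 1. Proof. exact: genG_one. Qed.
Lemma Gam2_mul x y : Gam2 x -> Gam2 y -> Gam2 (x * y). Proof. exact: genG_mul. Qed.
Lemma Gam2_inv x : Gam2 x -> Gam2 x^-1. Proof. exact: genG_inv. Qed.
Lemma Gam3_mul x y : Gam3 x -> Gam3 y -> Gam3 (x * y). Proof. exact: genG_mul. Qed.
Lemma Gam3_inv x : Gam3 x -> Gam3 x^-1. Proof. exact: genG_inv. Qed.
Hint Resolve Gam2_cm Gam2_1 Gam2_mul Gam2_inv Gam3_mul Gam3_inv Gam2_normal Gam3_normal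
  Gam32 Gam3_cml Gam3_cmr Gam4_cml Gam4_cmr : core.
Ltac sg := try solve [eauto 8 with core].

Lemma psi1 : psi 1 = (0, 0, 0)%R.
Proof. have := Hhom Gam2_1 Gam2_1; rewrite mulg1 /add3 => H; d3 H; g3. Qed.

Lemma psiV x : Gam2 x -> psi x^-1 = (- (psi x).1.1, - (psi x).1.2, - (psi x).2)%R.
Proof.
move=> Hx; have := Hhom Hx (genG_inv Hx); rewrite mulgV psi1 /add3 => H; d3 H; g3.
Qed.


Lemma add30 u : add3 (0, 0, 0)%R u = u.
Proof. by case: u => [[? ?] ?]; rewrite /add3 /= !add0r. Qed.

Lemma psi_conj3 g z : Gam3 z -> psi (g * z * g^-1) = psi z.
Proof.
move=> Hz; rewrite conjE (Hhom (Gam2_cm g z) (Gam32 Hz)).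
by rewrite (Hker (Gam4_cmr g Hz)) add30.
Qed.

Lemma D_mul g c c' : Gam2 c -> Gam2 c' ->
  psi (cm g (c * c')) = add3 (psi (cm g c)) (psi (cm g c')).
Proof.
move=> Hc Hc'; rewrite cmM2 Hhom ?psi_conj3; sg.
Qed.

Lemma D_conj g h c : Gam2 c -> psi (cm g (h * c * h^-1)) = psi (cm g c).
Proof.
move=> Hc; rewrite conjE D_mul  //.
by rewrite (Hker (Gam4_cmr g (Gam3_cmr h Hc))) add30.
Qed.

Lemma D_inv g c : Gam2 c ->
  psi (cm g c^-1) = (- (psi (cm g c)).1.1, - (psi (cm g c)).1.2, - (psi (cm g c)).2)%R.
Proof.
move=> Hc; have := D_mul g Hc (genG_inv Hc); rewrite mulgV cm1 psi1 => H.
d3 H; g3.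
Qed.

Definition NC (z : G) := genG (fun y => exists g, y = g * C * g^-1) z.

Lemma NC_normal g x : NC x -> NC (g * x * g^-1).
Proof.
apply: genG_normal => {}g {}x [h ->]; apply: genG_in; exists (g * h); gn.
by [].
Qed.

Lemma NC_C : NC C.
Proof. apply: genG_in; exists 1; gn; by []. Qed.

Lemma NC_cm x y : NC (cm x y).
Proof.
have step1 : forall s, s = a \/ s = b -> forall y, NC (cm s y).
  move=> s Hs {}y; elim: (Hgen y) => {y}.
  - move=> y [->|->]; case: Hs => ->; rewrite ?cmxx; try exact: genG_one;
    first [exact: NC_C | (rewrite -cmV; apply: genG_inv; exact: NC_C)].
  - rewrite cm1; exact: genG_one.
  - move=> y z _ Hy _ Hz; rewrite cmM2; apply: genG_mul => //; exact: NC_normal.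
  - move=> y _ Hy; rewrite cmV2; apply: NC_normal; exact: genG_inv.
elim: (Hgen x) y => {x}.
- by move=> x Hx y; apply: step1.
- move=> y; rewrite cm1l; exact: genG_one.
- move=> x z _ Hx _ Hz y; rewrite cmM1; apply: genG_mul; [apply: NC_normal; exact: Hz | exact: Hx].
- move=> x _ Hx y; rewrite cmV1; apply: NC_normal; apply: genG_inv; exact: Hx.
Qed.

Lemma Gam2_NC x : Gam2 x -> NC x.
Proof.
elim=> {x}; try by constructor.
move=> x [g [h ->]]; exact: NC_cm.
Qed.

Lemma Gam2_C : Gam2 C. Proof. exact: Gam2_cm. Qed.
Hint Resolve Gam2_C : core.

Lemma NC_Gam2 x : NC x -> Gam2 x.
Proof.
elim=> {x}; try by constructor.
move=> x [g ->]; exact: Gam2_normal Gam2_C.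
Qed.

Lemma psiCV : psi (cm a C) = (-1, 0, 0)%R /\ psi (cm b C) = (0, -1, 0)%R.
Proof.
rewrite -(cmV C a) -(cmV C b) !psiV  // HCA HCB /=.
by split; apply/triple_eq => /=; split; lia.
Qed.

Lemma DaE c : Gam2 c -> (psi (cm a c)).2 = 0%R /\ (psi (cm b c)).2 = 0%R.
Proof.
move/Gam2_NC; elim=> {c}.
- move=> _ [g ->]; rewrite !D_conj ?Gam2_C //.
  by case: psiCV => -> ->.
- by rewrite !cm1 psi1.
- move=> x y /NC_Gam2 Hx [H1 H2] /NC_Gam2 Hy [H3 H4].
  rewrite !D_mul //= H1 H2 H3 H4; by split.
- move=> x /NC_Gam2 Hx [H1 H2]; rewrite !D_inv //= H1 H2; by split.
Qed.

Lemma E3 z : Gam3 z -> (psi z).2 = 0%R.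
Proof.
elim=> {z}.
- move=> _ [x [y [Hx ->]]]; elim: (Hgen y) => {y}.
  + move=> y [->|->]; rewrite -cmV psiV //=; case: (DaE Hx) => H1 H2;
    by rewrite ?H1 ?H2 oppr0.
  + by rewrite cm1 psi1.
  + move=> y z _ Hy _ Hz; rewrite cmM2 Hhom; sg; rewrite psi_conj3 /=; sg.
    by rewrite Hy Hz addr0.
  + move=> y _ Hy; rewrite cmV2 psi_conj3; sg.
    by rewrite psiV //= Hy oppr0.
- by rewrite psi1.
- by move=> x y Hx H1 Hy H2; rewrite Hhom /=; sg; rewrite H1 H2 addr0.
- by move=> x Hx H1; rewrite psiV /=; sg; rewrite H1 oppr0.
Qed.

Lemma Einv g c : Gam2 c -> (psi (g * c * g^-1)).2 = (psi c).2.
Proof.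
move=> Hc; rewrite conjE Hhom  //= E3 ?add0r //; exact: Gam3_cmr.
Qed.

Lemma Dab c : Gam2 c -> psi (cm a c) = (- (psi c).2, 0, 0)%R /\
                        psi (cm b c) = (0, - (psi c).2, 0)%R.
Proof.
move/Gam2_NC; elim=> {c}.
- move=> _ [g ->]; rewrite !D_conj ?Gam2_C // Einv ?Gam2_C // HC.
  by case: psiCV => -> ->.
- by rewrite !cm1 psi1 oppr0.
- move=> x y /NC_Gam2 Hx [H1 H2] /NC_Gam2 Hy [H3 H4].
  rewrite !D_mul // H1 H2 H3 H4 Hhom //= /add3 /=.
  by split; apply/triple_eq => /=; split; lia.
- move=> x /NC_Gam2 Hx [H1 H2]; rewrite !D_inv // H1 H2 psiV //=;
  try by split; apply/triple_eq => /=; split; lia.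
Qed.


Definition ab (g : G) : int * int := (- (psi (cm b g)).2, (psi (cm a g)).2)%R.
Arguments ab : simpl never.

Lemma Ecm_mul x g h : (psi (cm x (g * h))).2 = ((psi (cm x g)).2 + (psi (cm x h)).2)%R.
Proof. rewrite cmM2 Hhom /=; sg; by rewrite Einv. Qed.

Lemma Ecm_inv x g : (psi (cm x g^-1)).2 = (- (psi (cm x g)).2)%R.
Proof. rewrite cmV2 Einv; sg; by rewrite psiV. Qed.

Lemma ab_mul g h : ab (g * h) = ((ab g).1 + (ab h).1, (ab g).2 + (ab h).2)%R.
Proof. rewrite /ab /= !Ecm_mul; congr (_, _); nia. Qed.

Lemma ab_inv g : ab g^-1 = (- (ab g).1, - (ab g).2)%R.
Proof. by rewrite /ab /= !Ecm_inv. Qed.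

Lemma ab_1 : ab 1 = (0, 0)%R.
Proof. by rewrite /ab !cm1 psi1 /= oppr0. Qed.

Lemma ab_a : ab a = (1, 0)%R.
Proof.
rewrite /ab cmxx psi1 -(cmV a b) psiV //=; rewrite -/C HC /=; congr (_, _); nia.
Qed.

Lemma ab_b : ab b = (0, 1)%R.
Proof. by rewrite /ab cmxx psi1 -/C HC /= oppr0. Qed.

Lemma ab_Gam2 c : Gam2 c -> ab c = (0, 0)%R.
Proof. move=> Hc; case: (Dab Hc) => H1 H2; by rewrite /ab H1 H2 /= oppr0. Qed.

Lemma conj_gen g c : Gam2 c -> psi (g * c * g^-1) =
  add3 (psi c) (- ((ab g).1 * (psi c).2), - ((ab g).2 * (psi c).2), 0)%R.
Proof.
elim: (Hgen g) c => {g}.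
- move=> g [->|->] c Hc; rewrite conjE Hhom //; case: (Dab Hc) => H1 H2.
  + rewrite H1 ab_a; apply/triple_eq; rewrite /add3 /=; split; nia.
  + rewrite H2 ab_b; apply/triple_eq; rewrite /add3 /=; split; nia.
- move=> c Hc; rewrite mul1g invg1 mulg1 ab_1; apply/triple_eq; rewrite /add3 /=; split; nia.
- move=> g h _ Hg _ Hh c Hc.
  have->: g * h * c * (g * h)^-1 = g * (h * c * h^-1) * g^-1 by gn.
  rewrite Hg; sg; rewrite Einv // Hh // ab_mul.
  apply/triple_eq; rewrite /add3 /=; split; nia.
- move=> g _ Hg c Hc.
  have Hc' : Gam2 (g^-1 * c * g^-1^-1) by sg.
  have := Hg _ Hc'; have->: g * (g^-1 * c * g^-1^-1) * g^-1 = c by gn.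
  rewrite Einv // => H.
  have H' : psi (g^-1 * c * g^-1^-1) =
     add3 (psi c) ((ab g).1 * (psi c).2, (ab g).2 * (psi c).2, 0)%R.
    d3 H; apply/triple_eq; rewrite /add3 /=; split; nia.
  rewrite H' ab_inv; apply/triple_eq; rewrite /add3 /=; split; nia.
Qed.

Lemma Ecm x y : (psi (cm x y)).2 = ((ab x).1 * (ab y).2 - (ab x).2 * (ab y).1)%R.
Proof.
elim: (Hgen y) => {y}.
- move=> y [->|->]; rewrite ?ab_a ?ab_b -cmV psiV //= /ab /=; lia.
- rewrite cm1 psi1 ab_1 /=; lia.
- move=> y z _ Hy _ Hz; rewrite Ecm_mul Hy Hz ab_mul /=; lia.
- move=> y _ Hy; rewrite Ecm_inv Hy ab_inv /=; lia.
Qed.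


Definition zp (x : G) (n : int) : G :=
  match n with Posz k => x ^+ k | Negz k => (x ^+ k.+1)^-1 end.

Lemma zp0 x : zp x 0 = 1. Proof. by []. Qed.
Lemma zp1 x : zp x 1 = x. Proof. by []. Qed.

Lemma zpS x n : zp x (n + 1)%R = zp x n * x.
Proof.
case: n => [k|[|k]].
- have -> : (Posz k + 1 = Posz k.+1)%R by lia.
  by rewrite /zp expgSr.
- have -> : (Negz 0 + 1 = 0)%R by [].
  by rewrite /zp expg1 mulVg.
- have -> : (Negz k.+1 + 1 = Negz k)%R by lia.
  by rewrite /zp [x ^+ k.+2]expgS invgM mulgVK.
Qed.

Lemma zpP x n : zp x (n - 1)%R = zp x n * x^-1.
Proof. by rewrite -{2}(subrK 1%R n) zpS mulgK. Qed.

Lemma zp_add x m n : zp x (m + n)%R = zp x m * zp x n.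
Proof.
elim/int_ind2: n => [|n IH|n IH].
- by rewrite addr0 zp0 mulg1.
- by rewrite addrA !zpS IH mulgA.
- by rewrite addrA !zpP IH mulgA.
Qed.

Lemma zpN x n : zp x (- n)%R = (zp x n)^-1.
Proof.
have H : zp x n * zp x (- n)%R = 1 by rewrite -zp_add subrr.
by rewrite (mulg1_eq H).
Qed.

Lemma zp_comm x n : zp x n * x = x * zp x n.
Proof. by rewrite -zpS addrC zp_add zp1. Qed.

Lemma ab_zp x n : ab (zp x n) = (n * (ab x).1, n * (ab x).2)%R.
Proof.
elim/int_ind2: n => [|n IH|n IH].
- by rewrite zp0 ab_1 !mul0r.
- rewrite zpS ab_mul IH /=; congr (_, _); nia.
- rewrite zpP ab_mul IH ab_inv /=; congr (_, _); nia.
Qed.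

Lemma zp_Gam2 c n : Gam2 c -> Gam2 (zp c n).
Proof.
move=> Hc; elim/int_ind2: n => [|n IH|n IH].
- by rewrite zp0.
- by rewrite zpS; sg.
- by rewrite zpP; sg.
Qed.
Hint Resolve zp_Gam2 : core.

Lemma psi_zp c n : Gam2 c ->
  psi (zp c n) = (n * (psi c).1.1, n * (psi c).1.2, n * (psi c).2)%R.
Proof.
move=> Hc; elim/int_ind2: n => [|n IH|n IH].
- by rewrite zp0 psi1 !mul0r.
- rewrite zpS Hhom; sg; rewrite IH; apply/triple_eq; rewrite /add3 /=; split; nia.
- rewrite zpP Hhom; sg; rewrite psiV // IH; apply/triple_eq; rewrite /add3 /=; split; nia.
Qed.

Definition rep x := zp a (ab x).1 * zp b (ab x).2.
Definition cx x := (rep x)^-1 * x.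

Lemma cx_Gam2 x : Gam2 (cx x).
Proof.
elim: (Hgen x) => {x}.
- move=> x [->|->]; rewrite /cx /rep ?ab_a ?ab_b /= expg0 expg1; gn; exact: Gam2_1.
- rewrite /cx /rep ab_1 /= expg0; gn; exact: Gam2_1.
- move=> x y _ Hx _ Hy; rewrite /cx /rep ab_mul /= !zp_add.
  move: Hx Hy; rewrite /cx /rep.
  move: (zp a (ab x).1) (zp b (ab x).2) (zp a (ab y).1) (zp b (ab y).2) => P Q R S Hx Hy.
  have [X HX ->] : exists2 X, Gam2 X & x = P * Q * X.
    by exists ((P * Q)^-1 * x) => //; gn.
  have [Y HY ->] : exists2 Y, Gam2 Y & y = R * S * Y.
    by exists ((R * S)^-1 * y) => //; gn.
  have -> : (P * R * (Q * S))^-1 * (P * Q * X * (R * S * Y)) =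
     (S^-1 * cm Q^-1 R^-1 * S^-1^-1) * ((S^-1 * R^-1) * X * (S^-1 * R^-1)^-1) * Y.
    by rewrite /cm; gn.
  sg.
- move=> x _ Hx; rewrite /cx /rep ab_inv /= (zpN a) (zpN b).
  move: Hx; rewrite /cx /rep.
  move: (zp a (ab x).1) (zp b (ab x).2) => P Q Hx.
  have [X HX ->] : exists2 X, Gam2 X & x = P * Q * X.
    by exists ((P * Q)^-1 * x) => //; gn.
  have -> : (P^-1 * Q^-1)^-1 * (P * Q * X)^-1 =
     ((Q * P) * X^-1 * (Q * P)^-1) * cm Q P.
    by rewrite /cm; gn.
  sg.
Qed.

Lemma rep_cx x : x = rep x * cx x.
Proof. by rewrite /cx; gn. Qed.

Lemma Ecm_zb m : (psi (cm a (zp b m))).2 = m.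
Proof. rewrite Ecm ab_zp ab_a ab_b /=; lia. Qed.
Lemma Ecm_za n : (psi (cm (zp a n) b)).2 = n.
Proof. rewrite Ecm ab_zp ab_a ab_b /=; lia. Qed.

Lemma v_fe m n : psi (cm a (zp b (m + n)%R)) =
  add3 (add3 (psi (cm a (zp b m))) (psi (cm a (zp b n)))) (0, - (m * n), 0)%R.
Proof.
rewrite zp_add cmM2 Hhom; sg. rewrite conj_gen // Ecm_zb ab_zp ab_b /=.
apply/triple_eq; rewrite /add3 /=; split; nia.
Qed.

Lemma t_fe m n : psi (cm (zp a (m + n)%R) b) =
  add3 (add3 (psi (cm (zp a m) b)) (psi (cm (zp a n) b))) (- (m * n), 0, 0)%R.
Proof.
rewrite zp_add cmM1 Hhom; sg. rewrite conj_gen // Ecm_za ab_zp ab_a /=.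
apply/triple_eq; rewrite /add3 /=; split; nia.
Qed.

Lemma v_form m : (psi (cm a (zp b m))).1.1 = 0%R /\
  (2 * (psi (cm a (zp b m))).1.2 = - (m * (m - 1)))%R.
Proof.
have H1 : psi (cm a (zp b 1)) = (0, 0, 1)%R by rewrite zp1.
elim/int_ind2: m => [|m [IH1 IH2]|m [IH1 IH2]].
- by rewrite zp0 cm1 psi1 /= mulr0.
- have := v_fe m 1; rewrite H1 => H; d3 H; split; nia.
- have := v_fe (m - 1) 1; rewrite subrK H1 => H; d3 H; split; nia.
Qed.

Lemma t_form n : (psi (cm (zp a n) b)).1.2 = 0%R /\
  (2 * (psi (cm (zp a n) b)).1.1 = - (n * (n - 1)))%R.
Proof.
have H1 : psi (cm (zp a 1) b) = (0, 0, 1)%R by rewrite zp1.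
elim/int_ind2: n => [|n [IH1 IH2]|n [IH1 IH2]].
- by rewrite zp0 cm1l psi1 /= mulr0.
- have := t_fe n 1; rewrite H1 => H; d3 H; split; nia.
- have := t_fe (n - 1) 1; rewrite subrK H1 => H; d3 H; split; nia.
Qed.


Variable N : nat.
Hypothesis hN : (1 <= N)%N.
Local Notation Np := (Nprime N).
Variable phi1 : G -> int * int.
Hypothesis Hphi1 : forall x y, eq2m N (phi1 (x * y)) (add2 (phi1 x) (phi1 y)).
Hypothesis Hphi1A : eq2m N (phi1 a) (1, 0)%R.
Hypothesis Hphi1B : eq2m N (phi1 b) (0, 1)%R.

Definition D3 (u : int * int * int) :=
  [/\ (Posz Np %| u.1.1)%Z, (Posz Np %| u.1.2)%Z & (Posz Np %| u.2)%Z].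

Lemma dvN x : (Posz N %| x)%Z -> (Posz Np %| x)%Z.
Proof. exact: dvdz_trans (Np_dvd N). Qed.

Lemma phi1_ab g : (Posz N %| (phi1 g).1 - (ab g).1)%Z /\ (Posz N %| (phi1 g).2 - (ab g).2)%Z.
Proof.
have H11 : (Posz N %| (phi1 1).1)%Z /\ (Posz N %| (phi1 1).2)%Z.
  case: (Hphi1 1 1) => /eqmP H1 /eqmP H2; rewrite mulg1 /= in H1 H2.
  split; [apply: (dvL (p := -1) (q := 0) H1 H1)|apply: (dvL (p := -1) (q := 0) H2 H2)]; lia.
elim: (Hgen g) => {g}.
- move=> g [->|->]; rewrite ?ab_a ?ab_b.
  + by case: Hphi1A => /eqmP H1 /eqmP H2.
  + by case: Hphi1B => /eqmP H1 /eqmP H2.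
- rewrite ab_1 /= !subr0; exact: H11.
- move=> g h _ [Hg1 Hg2] _ [Hh1 Hh2]; case: (Hphi1 g h) => /eqmP H1 /eqmP H2.
  rewrite ab_mul /=; split.
  + apply: (dvL3 (p := 1) (q := 1) (r := 1) H1 Hg1 Hh1) => /=; lia.
  + apply: (dvL3 (p := 1) (q := 1) (r := 1) H2 Hg2 Hh2) => /=; lia.
- move=> g _ [Hg1 Hg2]; case: (Hphi1 g g^-1) => /eqmP H1 /eqmP H2.
  rewrite mulgV in H1 H2; case: H11 => H3 H4.
  rewrite ab_inv /=; split.
  + apply: (dvL3 (p := -1) (q := 1) (r := -1) H1 H3 Hg1) => /=; lia.
  + apply: (dvL3 (p := -1) (q := 1) (r := -1) H2 H4 Hg2) => /=; lia.
Qed.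

Definition PhiG x := eq2m N (phi1 x) (0, 0)%R.

Lemma PhiG_ab x : PhiG x <-> (Posz N %| (ab x).1)%Z /\ (Posz N %| (ab x).2)%Z.
Proof.
move: (phi1_ab x); rewrite /PhiG /eq2m !eqmP /= !subr0.
case: (ab x) => [u v] /= [H1 H2].
split=> [[H3 H4]|[H3 H4]]; split.
- apply: (dvL (p := -1) (q := 1) H1 H3); lia.
- apply: (dvL (p := -1) (q := 1) H2 H4); lia.
- apply: (dvL (p := 1) (q := 1) H1 H3); lia.
- apply: (dvL (p := 1) (q := 1) H2 H4); lia.
Qed.

Lemma cm_comm (x y : G) : x * y = y * x -> cm x y = 1.
Proof. by move=> H; rewrite /cm H; gn. Qed.

Lemma ab_zb m : ab (zp b m) = (0, m)%R.
Proof. rewrite ab_zp ab_b /=; congr (_, _); lia. Qed.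
Lemma ab_za n : ab (zp a n) = (n, 0)%R.
Proof. rewrite ab_zp ab_a /=; congr (_, _); lia. Qed.

Lemma D3_0 : D3 (0, 0, 0)%R.
Proof. by split; exact: dvdz0. Qed.

Lemma D3_add u v : D3 u -> D3 v -> D3 (add3 u v).
Proof. by case=> H1 H2 H3 [H4 H5 H6]; split; rewrite /add3 /= rpredD. Qed.

Lemma D3_neg u : D3 u -> D3 (- u.1.1, - u.1.2, - u.2)%R.
Proof. by case=> H1 H2 H3; split; rewrite /= rpredN. Qed.

Lemma D3_corr p q e : (Posz Np %| e)%Z -> D3 (- (p * e), - (q * e), 0)%R.
Proof. by move=> He; split; rewrite /= ?rpredN ?dvdz_mull // dvdz0. Qed.

Lemma K m n : (Posz N %| m)%Z -> (Posz N %| n)%Z ->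
  forall g, D3 (psi (cm (zp b m * zp a n) g)).
Proof.
move=> Hm Hn g.
have Eab : ab (zp b m * zp a n) = (n, m)%R.
  rewrite ab_mul ab_zb ab_za /=; congr (_, _); lia.
have HE : forall h, (Posz Np %| (psi (cm (zp b m * zp a n) h)).2)%Z.
  move=> h; rewrite Ecm Eab; apply: dvN.
  case: (ab h) => [u v] /=.
  apply: (dvL (p := v) (q := - u) Hn Hm); nia.
elim: (Hgen g) => {g}.
- move=> g [->|->].
  + rewrite cmM1 (cm_comm (zp_comm a n)) mulg1 mulgV mul1g -cmV psiV //.
    case: (v_form m) => H1 H2; split => /=.
    * by rewrite H1 oppr0 dvdz0.
    * rewrite rpredN; apply: (half_dvd (y := - (m - 1)) Hm); nia.
    * rewrite Ecm_zb rpredN; exact: dvN.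
  + rewrite cmM1 (cm_comm (zp_comm b m)) mulg1 conj_gen // Ecm_za ab_zb.
    case: (t_form n) => H1 H2; split; rewrite /add3 /=.
    * rewrite mul0r oppr0 addr0; apply: (half_dvd (y := - (n - 1)) Hn); nia.
    * rewrite H1 add0r rpredN; apply: dvN; exact: dvdz_mulr.
    * rewrite addr0 Ecm_za; exact: dvN.
- rewrite cm1 psi1; exact: D3_0.
- move=> g h _ H1 _ H2.
  rewrite cmM2 Hhom; sg; rewrite conj_gen //.
  apply: D3_add => //; apply: D3_add => //; exact: D3_corr.
- move=> g _ H1.
  rewrite cmV2 conj_gen; sg; rewrite psiV //.
  apply: D3_add; first exact: D3_neg.
  apply: D3_corr; rewrite /= rpredN; exact: HE.
Qed.


Lemma eq3m_of u v d : D3 d -> u = add3 v d -> eq3m Np u v.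
Proof.
case=> H1 H2 H3 ->; rewrite /eq3m /add3 /= !eqmP.
by rewrite !(addrC v.1.1) !(addrC v.1.2) !(addrC v.2) !addrK.
Qed.

Lemma ab_mul1 g h : (ab (g * h)).1 = ((ab g).1 + (ab h).1)%R.
Proof. by rewrite ab_mul. Qed.
Lemma ab_mul2 g h : (ab (g * h)).2 = ((ab g).2 + (ab h).2)%R.
Proof. by rewrite ab_mul. Qed.
Lemma ab_inv1 g : (ab g^-1).1 = (- (ab g).1)%R.
Proof. by rewrite ab_inv. Qed.
Lemma ab_inv2 g : (ab g^-1).2 = (- (ab g).2)%R.
Proof. by rewrite ab_inv. Qed.

Lemma K0 m : (Posz N %| m)%Z -> forall g, D3 (psi (cm (zp b m) g)).
Proof.
move=> Hm g; have := K Hm (dvdz0 _) g; by rewrite zp0 mulg1.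
Qed.

Lemma D3_corr2 p q e : (Posz Np %| p)%Z -> (Posz Np %| q)%Z ->
  D3 (- (p * e), - (q * e), 0)%R.
Proof. by move=> Hp Hq; split; rewrite /= ?rpredN ?dvdz_mulr // dvdz0. Qed.

Lemma psib_mul x y : PhiG x -> PhiG y ->
  eq3m Np (psi (cx (x * y))) (add3 (psi (cx x)) (psi (cx y))).
Proof.
move=> /PhiG_ab [Hp Hq] /PhiG_ab [Hr Hs].
have HX := cx_Gam2 x; have HY := cx_Gam2 y.
have E : cx (x * y) =
  (zp b (ab y).2)^-1 * cm (zp b (ab x).2)^-1 (zp a (ab y).1)^-1 * (zp b (ab y).2)^-1^-1
  * (((zp b (ab y).2)^-1 * (zp a (ab y).1)^-1) * cx x
     * ((zp b (ab y).2)^-1 * (zp a (ab y).1)^-1)^-1) * cx y.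
  rewrite /cx /rep ab_mul1 ab_mul2 !zp_add /cm; gn; by [].
rewrite E Hhom; sg. rewrite Hhom; sg. rewrite !conj_gen //; sg.
rewrite -!zpN ab_zb ab_mul1 ab_mul2 ab_zb ab_za.
set k := cm _ _.
have Hk : D3 (psi k) by rewrite /k zpN -zpN; apply: K0; rewrite rpredN.
set e1 := (psi k).2; set e2 := (psi (cx x)).2.
move: Hr Hs; case: (ab y) => [r s] /= Hr Hs.
have Hr' : (Posz Np %| - r)%Z by rewrite rpredN; exact: dvN.
have Hs' : (Posz Np %| - s)%Z by rewrite rpredN; exact: dvN.
have Hrs : (Posz Np %| - r + 0)%Z by rewrite addr0.
have Hss : (Posz Np %| - s + 0)%Z by rewrite addr0.
apply: (eq3m_of (d := add3 (psi k) (add3 (- (0 * e1), - ((- s) * e1), 0)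
                        (- ((- r + 0) * e2), - ((- s + 0) * e2), 0))%R)).
- apply: D3_add => //; apply: D3_add.
  + exact: (D3_corr2 _ (dvdz0 _) Hs').
  + exact: (D3_corr2 _ Hrs Hss).
- apply/triple_eq; rewrite /add3 /=; split; lia.
Qed.

Lemma psib_Gam2 x : Gam2 x -> psi (cx x) = psi x.
Proof. move=> Hx; by rewrite /cx /rep ab_Gam2 //= !expg0 mulg1 invg1 mul1g. Qed.

Lemma psib_zaN : psi (cx (zp a N)) = (0, 0, 0)%R.
Proof. by rewrite /cx /rep ab_za /= expg0 mulg1 mulVg psi1. Qed.
Lemma psib_zbN : psi (cx (zp b N)) = (0, 0, 0)%R.
Proof. by rewrite /cx /rep ab_zb /= expg0 mul1g mulVg psi1. Qed.


Variable phi2 : G -> int.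
Hypothesis Hphi2 : forall x y, PhiG x -> PhiG y ->
  eqm Np (phi2 (x * y)) (phi2 x + phi2 y)%R.
Hypothesis Hphi2A : eqm Np (phi2 (zp a (Posz N))) 0%R.
Hypothesis Hphi2B : eqm Np (phi2 (zp b (Posz N))) 0%R.
Hypothesis Hphi2C : forall i j : int,
  eqm Np (phi2 (zp a i * zp b j * C * (zp b (- j)%R * zp a (- i)%R))) 1%R.

Lemma PhiG_1 : PhiG 1.
Proof. apply/PhiG_ab; rewrite ab_1 /=; split; exact: dvdz0. Qed.
Lemma PhiG_mul x y : PhiG x -> PhiG y -> PhiG (x * y).
Proof.
move=> /PhiG_ab [H1 H2] /PhiG_ab [H3 H4]; apply/PhiG_ab.
by rewrite ab_mul1 ab_mul2 !rpredD.
Qed.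
Lemma PhiG_inv x : PhiG x -> PhiG x^-1.
Proof.
move=> /PhiG_ab [H1 H2]; apply/PhiG_ab.
rewrite ab_inv1 ab_inv2; split; rewrite rpredN //.
Qed.
Lemma PhiG_Gam2 x : Gam2 x -> PhiG x.
Proof. move=> Hx; apply/PhiG_ab; rewrite ab_Gam2 //=; split; exact: dvdz0. Qed.
Hint Resolve PhiG_1 PhiG_mul PhiG_inv PhiG_Gam2 : core.

Lemma phi2_1 : (Posz Np %| phi2 1)%Z.
Proof.
have /eqmP := Hphi2 PhiG_1 PhiG_1; rewrite mulg1 => H.
apply: (dvL (p := -1) (q := 0) H H); lia.
Qed.

Lemma phi2_inv x : PhiG x -> (Posz Np %| phi2 x^-1 + phi2 x)%Z.
Proof.
move=> Hx; have /eqmP := Hphi2 (PhiG_inv Hx) Hx; rewrite mulVg => H.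
have H1 := phi2_1. set u := phi2 x^-1 in H *. set o := phi2 1 in H H1 *.
apply: (dvL (p := -1) (q := 1) H H1); lia.
Qed.

Lemma phi2_mul x y : PhiG x -> PhiG y -> (Posz Np %| phi2 (x * y) - (phi2 x + phi2 y))%Z.
Proof. by move=> Hx Hy; apply/eqmP; exact: Hphi2. Qed.

Lemma phi2_cm x y : PhiG x -> PhiG y -> (Posz Np %| phi2 (cm x y))%Z.
Proof.
move=> Hx Hy; rewrite /cm.
have H1 := phi2_mul (PhiG_mul (PhiG_mul Hx Hy) (PhiG_inv Hx)) (PhiG_inv Hy).
have H2 := phi2_mul (PhiG_mul Hx Hy) (PhiG_inv Hx).
have H3 := phi2_mul Hx Hy.
have H4 := phi2_inv Hx. have H5 := phi2_inv Hy.
set t1 := phi2 _ in H1.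
apply: (dvL (p := 1) (q := 1) H1 (dvL (p := 1) (q := 1) H2
         (dvL (p := 1) (q := 1) H3 (dvL (p := 1) (q := 1) H4 H5 (erefl _)) (erefl _)) (erefl _))).
rewrite /t1; lia.
Qed.

Lemma phi2_zpN x : PhiG (zp x (Posz N)) -> (Posz Np %| phi2 (zp x (Posz N)))%Z ->
  forall k, (Posz Np %| phi2 (zp x (k * Posz N)%R))%Z.
Proof.
move=> HP HN.
have HPk : forall k, PhiG (zp x (k * Posz N)%R).
  elim/int_ind2 => [|k IH|k IH].
  - by rewrite mul0r zp0.
  - by rewrite mulrDl mul1r zp_add; auto.
  - by rewrite mulrBl mul1r zp_add zpN; auto.
elim/int_ind2 => [|k IH|k IH].
- by rewrite mul0r zp0 phi2_1.
- rewrite mulrDl mul1r zp_add.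
  have H := phi2_mul (HPk k) HP.
  apply: (dvL3 (p := 1) (q := 1) (r := 1) H IH HN); lia.
- rewrite mulrBl mul1r zp_add zpN.
  have H := phi2_mul (HPk k) (PhiG_inv HP).
  have H' := phi2_inv HP.
  set A := phi2 (zp x (k * Posz N)%R * (zp x (Posz N))^-1) in H *.
  set B := phi2 (zp x (Posz N))^-1 in H H' *.
  apply: (dvL3 (p := 1) (q := 1) (r := 1) H IH (dvL (p := 1) (q := -1) H' HN (erefl _))); lia.
Qed.


Lemma phi2_NC c : Gam2 c -> (Posz Np %| phi2 c - (psi c).2)%Z.
Proof.
move/Gam2_NC; elim=> {c}.
- move=> _ [g ->].
  set p := (ab g).1; set q := (ab g).2.
  set h := zp a p * zp b q.
  set X := h * cx g * h^-1.
  set Y := h * C * h^-1.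
  have Eg : g * C * g^-1 = cm X Y * Y.
    rewrite /X /Y /h /cm /cx /rep -/p -/q; gn; by [].
  have HX : Gam2 X by rewrite /X; apply: Gam2_normal; exact: cx_Gam2.
  have HY : Gam2 Y by rewrite /Y; apply: Gam2_normal; exact: Gam2_C.
  have H1 := phi2_mul (PhiG_Gam2 (Gam2_cm X Y)) (PhiG_Gam2 HY).
  have H2 := phi2_cm (PhiG_Gam2 HX) (PhiG_Gam2 HY).
  have /eqmP H3 := Hphi2C p q.
  have EY : zp a p * zp b q * C * (zp b (- q)%R * zp a (- p)%R) = Y.
    by rewrite /Y /h (zpN b) (zpN a) invgM.
  rewrite EY in H3.
  rewrite Einv // HC Eg /=.
  set A := phi2 (cm X Y * Y) in H1 *.
  set B := phi2 (cm X Y) in H1 H2.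
  set D := phi2 Y in H1 H3.
  apply: (dvL3 (p := 1) (q := 1) (r := 1) H1 H2 H3); lia.
- rewrite psi1 /= subr0; exact: phi2_1.
- move=> x y /NC_Gam2 Hx H1 /NC_Gam2 Hy H2.
  have H3 := phi2_mul (PhiG_Gam2 Hx) (PhiG_Gam2 Hy).
  rewrite Hhom //= /add3 /=.
  set A := phi2 (x * y) in H3 *.
  apply: (dvL3 (p := 1) (q := 1) (r := 1) H3 H1 H2); lia.
- move=> x /NC_Gam2 Hx H1.
  have H2 := phi2_inv (PhiG_Gam2 Hx).
  rewrite psiV //=.
  set A := phi2 x^-1 in H2 *.
  apply: (dvL (p := 1) (q := -1) H2 H1); lia.
Qed.

Lemma phi2_E d : PhiG d -> (Posz Np %| phi2 d - (psi (cx d)).2)%Z.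
Proof.
move=> Hd; have [Hp Hq] := (PhiG_ab d).1 Hd.
have HPa : PhiG (zp a (Posz N)).
  apply/PhiG_ab; rewrite ab_za /=; split; [exact: dvdzz | exact: dvdz0].
have HPb : PhiG (zp b (Posz N)).
  apply/PhiG_ab; rewrite ab_zb /=; split; [exact: dvdz0 | exact: dvdzz].
have HNa : (Posz Np %| phi2 (zp a (Posz N)))%Z.
  by move/eqmP: Hphi2A; rewrite subr0.
have HNb : (Posz Np %| phi2 (zp b (Posz N)))%Z.
  by move/eqmP: Hphi2B; rewrite subr0.
have HPp : PhiG (zp a (ab d).1).
  apply/PhiG_ab; rewrite ab_za /=; split; [exact: Hp | exact: dvdz0].
have HPq : PhiG (zp b (ab d).2).
  apply/PhiG_ab; rewrite ab_zb /=; split; [exact: dvdz0 | exact: Hq].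
have H1 : (Posz Np %| phi2 (zp a (ab d).1))%Z.
  case/dvdzP: Hp => k ->; exact: phi2_zpN.
have H2 : (Posz Np %| phi2 (zp b (ab d).2))%Z.
  case/dvdzP: Hq => k ->; exact: phi2_zpN.
have HC' := cx_Gam2 d.
have H3 := phi2_NC HC'.
have H4 := phi2_mul (PhiG_mul HPp HPq) (PhiG_Gam2 HC').
have H5 := phi2_mul HPp HPq.
rewrite {1}(rep_cx d) /rep.
set A := phi2 (zp a (ab d).1 * zp b (ab d).2 * cx d) in H4 *.
set B := phi2 (zp a (ab d).1 * zp b (ab d).2) in H4 H5.
set P := phi2 (zp a (ab d).1) in H1 H5.
set Q := phi2 (zp b (ab d).2) in H2 H5.
set R := phi2 (cx d) in H3 H4.
apply: (dvL3 (p := 1) (q := 1) (r := 1) H4 H5 (dvL3 (p := 1) (q := 1) (r := 1) H1 H2 H3 (erefl _)));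
  lia.
Qed.

Lemma psib_conj g d : PhiG d ->
  eq3m Np (psi (cx (g * d * g^-1)))
    (add3 (- ((phi1 g).1 * phi2 d), - ((phi1 g).2 * phi2 d), 0)%R (psi (cx d))).
Proof.
move=> Hd; have [Hp Hq] := (PhiG_ab d).1 Hd.
have E1 : (ab (g * d * g^-1)).1 = (ab d).1 by rewrite !ab_mul1 ab_inv1; lia.
have E2 : (ab (g * d * g^-1)).2 = (ab d).2 by rewrite !ab_mul2 ab_inv2; lia.
have Ec : cx (g * d * g^-1) =
    cm (zp b (- (ab d).2)%R * zp a (- (ab d).1)%R) g * (g * cx d * g^-1).
  rewrite /cx /rep E1 E2 (zpN b) (zpN a) /cm; gn; by [].
have HK := K (m := (- (ab d).2)%R) (n := (- (ab d).1)%R).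
rewrite rpredN in HK; have {}HK := HK Hq; rewrite rpredN in HK; have {}HK := HK Hp g.
have HX := cx_Gam2 d.
rewrite Ec Hhom; sg. rewrite conj_gen //.
have HE := phi2_E Hd.
have [Hf1 Hf2] := phi1_ab g.
move: HK HE Hf1 Hf2.
set W := psi (cm _ g).
set e := (psi (cx d)).2.
set f := phi2 d.
case: (phi1 g) => [f1 f2]; case: (ab g) => [g1 g2] /= HK HE Hf1 Hf2.
apply: (eq3m_of (d := add3 W (f1 * f - g1 * e, f2 * f - g2 * e, 0)%R)).
- apply: D3_add => //; split => /=.
  + apply: (dvL (p := f1) (q := e) HE (dvN Hf1)); nia.
  + apply: (dvL (p := f2) (q := e) HE (dvN Hf2)); nia.
  + exact: dvdz0.
- apply/triple_eq; rewrite /add3 /=; split; lia.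
Qed.

Lemma psib_P5 i j k :
  psi (cx (zp a i * zp b j * zp C k * (zp b (- j)%R * zp a (- i)%R))) =
  (- (i * k), - (j * k), k)%R.
Proof.
have Ex : zp a i * zp b j * zp C k * (zp b (- j)%R * zp a (- i)%R) =
    (zp a i * zp b j) * zp C k * (zp a i * zp b j)^-1.
  by rewrite (zpN b) (zpN a) invgM.
rewrite Ex psib_Gam2; last by apply: Gam2_normal; apply: zp_Gam2; exact: Gam2_C.
rewrite conj_gen; last by apply: zp_Gam2; exact: Gam2_C.
rewrite psi_zp ?Gam2_C // HC ab_mul1 ab_mul2 ab_za ab_zb /=.
apply/triple_eq; rewrite /add3 /=; split; lia.
Qed.

End Abs.

Lemma ord2E (i : 'I_2) : i = i0 \/ i = i1.
Proof. case: i => [[|[|//]] Hi]; [left|right]; exact: val_inj. Qed.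

Lemma lift00 : lift i0 (ord0 : 'I_1) = i1. Proof. exact: val_inj. Qed.
Lemma lift10 : lift i1 (ord0 : 'I_1) = i0. Proof. exact: val_inj. Qed.

Lemma matP2 (M N : mat) : M i0 i0 = N i0 i0 -> M i0 i1 = N i0 i1 ->
  M i1 i0 = N i1 i0 -> M i1 i1 = N i1 i1 -> M = N.
Proof.
move=> H1 H2 H3 H4; apply/matrixP => i j.
by case: (ord2E i) => ->; case: (ord2E j) => ->.
Qed.

Section Entries.
Variables M N : mat.
Let sum2 (F : 'I_2 -> int) : \sum_(k < 2) F k = F i0 + F i1.
Proof. by rewrite !big_ord_recl big_ord0 addr0; congr (_ + F _); apply: val_inj. Qed.
Lemma mul00 : (M *m N) i0 i0 = M i0 i0 * N i0 i0 + M i0 i1 * N i1 i0.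
Proof. by rewrite mxE sum2. Qed.
Lemma mul01 : (M *m N) i0 i1 = M i0 i0 * N i0 i1 + M i0 i1 * N i1 i1.
Proof. by rewrite mxE sum2. Qed.
Lemma mul10 : (M *m N) i1 i0 = M i1 i0 * N i0 i0 + M i1 i1 * N i1 i0.
Proof. by rewrite mxE sum2. Qed.
Lemma mul11 : (M *m N) i1 i1 = M i1 i0 * N i0 i1 + M i1 i1 * N i1 i1.
Proof. by rewrite mxE sum2. Qed.

Lemma adjE i j : \adj M i j = (-1) ^+ (j + i) * M (lift j ord0) (lift i ord0).
Proof. by rewrite mxE /cofactor det_mx11 !mxE. Qed.
Lemma adj00 : \adj M i0 i0 = M i1 i1.
Proof. by rewrite adjE /= expr0 mul1r lift00. Qed.
Lemma adj01 : \adj M i0 i1 = - M i0 i1.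
Proof. by rewrite adjE /= expr1 mulN1r lift00 lift10. Qed.
Lemma adj10 : \adj M i1 i0 = - M i1 i0.
Proof. by rewrite adjE /= expr1 mulN1r lift00 lift10. Qed.
Lemma adj11 : \adj M i1 i1 = M i0 i0.
Proof. by rewrite adjE /= expr2 mulN1r opprK mul1r lift10. Qed.

End Entries.
Lemma det2 (M : mat) : \det M = M i0 i0 * M i1 i1 - M i0 i1 * M i1 i0.
Proof.
have := congr1 (fun A : mat => A i0 i0) (mul_mx_adj M).
rewrite /= mul00 adj00 adj10 mxE /= mulr1n => <-; lia.
Qed.

Lemma oppE (M : mat) i j : (- M) i j = - M i j.
Proof. by rewrite mxE. Qed.
Lemma oneE i j : (1%:M : mat) i j = (i == j)%:R.
Proof. by rewrite mxE. Qed.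

Definition good (M : mat) : Prop :=
  [/\ M i0 i0 * M i1 i1 - M i0 i1 * M i1 i0 = 1,
      (M i0 i0 = 1 %[mod 2])%Z, (M i0 i1 = 0 %[mod 2])%Z,
      (M i1 i0 = 0 %[mod 2])%Z & (M i1 i1 = 1 %[mod 2])%Z].

Lemma inG_good M : inG M <-> good M /\ 0 < M i0 i0.
Proof.
rewrite /inG /good det2; split.
- by case=> Hd [Hm Hp]; split=> //; split.
- case=> [[Hd H1 H2 H3 H4] Hp]; split=> //; split=> // i j.
  by case: (ord2E i) => ->; case: (ord2E j) => ->; rewrite ?eqxx.
Qed.

Definition inGb (M : mat) : bool :=
  (M i0 i0 * M i1 i1 - M i0 i1 * M i1 i0 == 1) &&
  (M i0 i0 == 1 %[mod 2])%Z && (M i0 i1 == 0 %[mod 2])%Z &&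
  (M i1 i0 == 0 %[mod 2])%Z && (M i1 i1 == 1 %[mod 2])%Z && (0 < M i0 i0).

Lemma inGP M : inG M <-> inGb M.
Proof.
rewrite inG_good /good /inGb; split.
- by case=> [[/eqP -> /eqP -> /eqP -> /eqP -> /eqP ->] ->].
- by case/andP=> /andP [/andP [/andP [/andP [/eqP ? /eqP ?] /eqP ?] /eqP ?] /eqP ?] ?.
Qed.

Lemma normalize_good M : good M -> inG (normalize M).
Proof.
case=> Hd H1 H2 H3 H4; apply/inG_good; rewrite /normalize.
case: ifP => Hn; rewrite ?oppE; split; try split; rewrite ?oppE; lia.
Qed.

Lemma odd_mul (x y : int) : (x = 1 %[mod 2])%Z -> (y = 1 %[mod 2])%Z -> (x * y = 1 %[mod 2])%Z.
Proof. by move=> Hx Hy; rewrite -modzMml Hx -modzMmr Hy. Qed.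
Lemma even_mull (x y : int) : (x = 0 %[mod 2])%Z -> (x * y = 0 %[mod 2])%Z.
Proof. by move=> Hx; rewrite -modzMml Hx mul0r. Qed.
Lemma even_mulr (x y : int) : (y = 0 %[mod 2])%Z -> (x * y = 0 %[mod 2])%Z.
Proof. by move=> Hy; rewrite -modzMmr Hy mulr0. Qed.

Lemma good_mul M N : good M -> good N -> good (M *m N).
Proof.
case=> Hd H1 H2 H3 H4 [Hd' H1' H2' H3' H4'].
have Hdet := det_mulmx M N; rewrite !det2 Hd Hd' mulr1 in Hdet.
split; rewrite ?mul00 ?mul01 ?mul10 ?mul11.
- by rewrite -mul00 -mul01 -mul10 -mul11.
- have := odd_mul H1 H1'; have := even_mull (M i1 i0) H2; have := even_mulr (M i0 i1) H3'.
  set u := M i0 i0 * N i0 i0; set v := M i0 i1 * N i1 i0; set w := M i1 i0 * M i0 i1; lia.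
- have := even_mulr (M i0 i0) H2'; have := even_mull (N i1 i1) H2.
  set u := M i0 i0 * N i0 i1; set v := M i0 i1 * N i1 i1; lia.
- have := even_mull (N i0 i0) H3; have := even_mulr (M i1 i1) H3'.
  set u := M i1 i0 * N i0 i0; set v := M i1 i1 * N i1 i0; lia.
- have := even_mull (N i0 i1) H3; have := odd_mul H4 H4'.
  set u := M i1 i0 * N i0 i1; set v := M i1 i1 * N i1 i1; lia.
Qed.

Lemma good_adj M : good M -> good (\adj M).
Proof.
case=> Hd H1 H2 H3 H4.
split; rewrite ?adj00 ?adj01 ?adj10 ?adj11; lia.
Qed.

Lemma inGW M : inG M -> good M. Proof. by case/inG_good. Qed.

Lemma normalize_id (M : mat) : 0 < M i0 i0 -> normalize M = M.
Proof. by rewrite /normalize => H; case: ifP => //; lia. Qed.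

Lemma normalizeN (M : mat) : M i0 i0 != 0 -> normalize (- M) = normalize M.
Proof.
rewrite /normalize oppE opprK => H.
case: ifP; case: ifP => //; lia.
Qed.

Lemma normalize_cases (M : mat) : normalize M = M \/ normalize M = - M.
Proof. rewrite /normalize; case: ifP; by [right|left]. Qed.

Lemma norm_mull (A B : mat) : (A *m B) i0 i0 != 0 -> normalize (normalize A *m B) = normalize (A *m B).
Proof. by move=> H; case: (normalize_cases A) => ->; rewrite ?mulNmx ?normalizeN. Qed.
Lemma norm_mulr (A B : mat) : (A *m B) i0 i0 != 0 -> normalize (A *m normalize B) = normalize (A *m B).
Proof. by move=> H; case: (normalize_cases B) => ->; rewrite ?mulmxN ?normalizeN. Qed.

Lemma good00 (M : mat) : good M -> M i0 i0 != 0.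
Proof. case=> _ H1 _ _ _; lia. Qed.

Lemma inG_mul (M N : mat) : inG M -> inG N -> inG (gmul M N).
Proof. move=> /inGW HM /inGW HN; exact: normalize_good (good_mul HM HN). Qed.
Lemma inG_inv (M : mat) : inG M -> inG (ginv M).
Proof. move=> /inGW HM; exact: normalize_good (good_adj HM). Qed.
Lemma inG_one : inG gone.
Proof. apply/inG_good; rewrite /good !oneE /=; split; [split|]; lia. Qed.

Lemma gmulA (M N P : mat) : inG M -> inG N -> inG P -> gmul (gmul M N) P = gmul M (gmul N P).
Proof.
move=> /inGW HM /inGW HN /inGW HP.
have H : (M *m N *m P) i0 i0 != 0 := good00 (good_mul (good_mul HM HN) HP).
by rewrite /gmul norm_mull // norm_mulr ?mulmxA.
Qed.

Lemma gmul1 (M : mat) : inG M -> gmul gone M = M.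
Proof. by move=> /inG_good [_ H]; rewrite /gmul /gone mul1mx normalize_id. Qed.
Lemma gmul1r (M : mat) : inG M -> gmul M gone = M.
Proof. by move=> /inG_good [_ H]; rewrite /gmul /gone mulmx1 normalize_id. Qed.

Lemma gmulV (M : mat) : inG M -> gmul (ginv M) M = gone.
Proof.
move=> HM; have Hd : \det M = 1 by case: HM.
rewrite /gmul /ginv norm_mull mul_adj_mx Hd ?normalize_id /gone // mxE //.
Qed.
Lemma gmulV' (M : mat) : inG M -> gmul M (ginv M) = gone.
Proof.
move=> HM; have Hd : \det M = 1 by case: HM.
rewrite /gmul /ginv norm_mulr mul_mx_adj Hd ?normalize_id /gone // mxE //.
Qed.

Definition GG := {M : mat | inGb M}.
HB.instance Definition _ := Choice.on GG.

Lemma inGv (x : GG) : inG (val x). Proof. by apply/inGP; case: x. Qed.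

Definition GGmul (x y : GG) : GG := exist _ (gmul (val x) (val y)) (iffLR (inGP _) (inG_mul (inGv x) (inGv y))).
Definition GGinv (x : GG) : GG := exist _ (ginv (val x)) (iffLR (inGP _) (inG_inv (inGv x))).
Definition GGone : GG := exist _ gone (iffLR (inGP _) inG_one).

Lemma GGmulA : associative GGmul.
Proof. move=> x y z; apply: val_inj; exact: (esym (gmulA (inGv x) (inGv y) (inGv z))). Qed.
Lemma GGmul1 : left_id GGone GGmul.
Proof. move=> x; apply: val_inj; exact: (gmul1 (inGv x)). Qed.
Lemma GGmul1r : right_id GGone GGmul.
Proof. move=> x; apply: val_inj; exact: (gmul1r (inGv x)). Qed.
Lemma GGmulV : left_inverse GGone GGinv GGmul.
Proof. move=> x; apply: val_inj; exact: (gmulV (inGv x)). Qed.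
Lemma GGmulV' : right_inverse GGone GGinv GGmul.
Proof. move=> x; apply: val_inj; exact: (gmulV' (inGv x)). Qed.

HB.instance Definition _ := isGroup.Build GG GGmulA GGmul1 GGmul1r GGmulV GGmulV'.


Lemma Am_E : [/\ Am i0 i0 = 1, Am i0 i1 = 2, Am i1 i0 = 0 & Am i1 i1 = 1].
Proof. by rewrite !mxE. Qed.
Lemma Bm_E : [/\ Bm i0 i0 = 1, Bm i0 i1 = 0, Bm i1 i0 = 2 & Bm i1 i1 = 1].
Proof. by rewrite !mxE. Qed.

Lemma inG_Am : inGb Am.
Proof. apply/inGP/inG_good; rewrite /good; case: Am_E => -> -> -> ->; split; [split|]; lia. Qed.
Lemma inG_Bm : inGb Bm.
Proof. apply/inGP/inG_good; rewrite /good; case: Bm_E => -> -> -> ->; split; [split|]; lia. Qed.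

Definition aG : GG := exist _ Am inG_Am.
Definition bG : GG := exist _ Bm inG_Bm.

Lemma val_mul (x y : GG) : val (x * y)%g = gmul (val x) (val y). Proof. by []. Qed.
Lemma val_inv (x : GG) : val (x^-1)%g = ginv (val x). Proof. by []. Qed.
Lemma val_one : val (1%g : GG) = gone. Proof. by []. Qed.

Lemma normE X i j : normalize X i j = (if X i0 i0 < 0 then - X i j else X i j).
Proof. by rewrite /normalize; case: ifP; rewrite ?oppE. Qed.

Lemma zpA_E n : [/\ val (zp aG n) i0 i0 = 1, val (zp aG n) i0 i1 = 2 * n,
  val (zp aG n) i1 i0 = 0 & val (zp aG n) i1 i1 = 1].
Proof.
have [a1 a2 a3 a4] := Am_E.
elim/int_ind2: n => [|n [h1 h2 h3 h4]|n [h1 h2 h3 h4]].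
- by rewrite zp0 val_one /gone !oneE /=; split; lia.
- rewrite zpS val_mul /gmul normalize_id; last by rewrite mul00 ?a1 ?a3 ?h1 ?h2; lia.
  by split; rewrite ?mul00 ?mul01 ?mul10 ?mul11 ?a1 ?a2 ?a3 ?a4 ?h1 ?h2 ?h3 ?h4; lia.
- have Hi : ginv (val aG) = \adj (val aG).
    by rewrite /ginv normalize_id // adj00 /= a4.
  rewrite zpP val_mul val_inv Hi /gmul normalize_id;
    last by rewrite mul00 ?adj00 ?adj10 /= ?a1 ?a2 ?a3 ?a4 ?h1 ?h2; lia.
  by split; rewrite ?mul00 ?mul01 ?mul10 ?mul11 ?adj00 ?adj01 ?adj10 ?adj11 /=
     ?a1 ?a2 ?a3 ?a4 ?h1 ?h2 ?h3 ?h4; lia.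
Qed.

Lemma zpB_E n : [/\ val (zp bG n) i0 i0 = 1, val (zp bG n) i0 i1 = 0,
  val (zp bG n) i1 i0 = 2 * n & val (zp bG n) i1 i1 = 1].
Proof.
have [a1 a2 a3 a4] := Bm_E.
elim/int_ind2: n => [|n [h1 h2 h3 h4]|n [h1 h2 h3 h4]].
- by rewrite zp0 val_one /gone !oneE /=; split; lia.
- rewrite zpS val_mul /gmul normalize_id; last by rewrite mul00 ?a1 ?a3 ?h1 ?h2; lia.
  by split; rewrite ?mul00 ?mul01 ?mul10 ?mul11 ?a1 ?a2 ?a3 ?a4 ?h1 ?h2 ?h3 ?h4; lia.
- have Hi : ginv (val bG) = \adj (val bG).
    by rewrite /ginv normalize_id // adj00 /= a4.
  rewrite zpP val_mul val_inv Hi /gmul normalize_id;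
    last by rewrite mul00 ?adj00 ?adj10 /= ?a1 ?a2 ?a3 ?a4 ?h1 ?h2; lia.
  by split; rewrite ?mul00 ?mul01 ?mul10 ?mul11 ?adj00 ?adj01 ?adj10 ?adj11 /=
     ?a1 ?a2 ?a3 ?a4 ?h1 ?h2 ?h3 ?h4; lia.
Qed.

Lemma red (x z : int) : z != 0 -> (x + z = 1 %[mod 2])%Z ->
  exists k, (`|x + 2 * k * z| < `|z|)%R.
Proof.
move=> Hz Hp.
have Hd : 2 * z != 0 by lia.
have E := divz_eq x (2 * z).
have H0 := modz_ge0 x Hd. have H1 := ltz_mod x Hd.
move: E H0 H1 Hp; set q := (x %/ (2 * z))%Z; set r := (x %% (2 * z))%Z => E H0 H1 Hp.
case: (ltrP r `|z|) => Hr.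
- exists (- q); nia.
- case: (ltrP 0 z) => Hs; [exists (- q - 1) | exists (- q + 1)]; nia.
Qed.

Definition Sab (y : GG) : Prop := y = aG \/ y = bG.

Lemma zp_gen (g : GG) n : genG Sab g -> genG Sab (zp g n).
Proof.
move=> Hg; elim/int_ind2: n => [|n IH|n IH].
- rewrite zp0; exact: genG_one.
- rewrite zpS; exact: genG_mul.
- rewrite zpP; apply: genG_mul => //; exact: genG_inv.
Qed.

Lemma norm_abs X i j : absz (normalize X i j) = absz (X i j).
Proof. by rewrite normE; case: ifP; rewrite ?abszN. Qed.

Lemma gen_all (x : GG) : genG Sab x.
Proof.
pose m (x : GG) := (absz (val x i0 i0) + absz (val x i1 i0))%N.
suff H : forall n (x : GG), (m x <= n)%N -> genG Sab x by apply: (H (m x)).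
elim=> [|n IH] {}x Hx;
  have [[Hd H1 H2 H3 H4] Hpos] := (inG_good _).1 (inGv x).
- exfalso; rewrite /m in Hx; lia.
case: (eqVneq (val x i1 i0) 0) => H10.
- have -> : x = zp aG (val x i0 i1 %/ 2)%Z.
    apply: val_inj; have [e1 e2 e3 e4] := zpA_E (val x i0 i1 %/ 2)%Z.
    rewrite H10 mulr0 subr0 in Hd.
    have [E1 E2] : val x i0 i0 = 1 /\ val x i1 i1 = 1.
      case: (ltrP 0 (val x i1 i1)) => Hs; nia.
    apply: matP2; rewrite ?e1 ?e2 ?e3 ?e4 //; lia.
  apply: zp_gen; apply: genG_in; by left.
case: (ltrP `|val x i1 i0| `|val x i0 i0|) => Hlt.
- have [k Hk] := red (x := val x i0 i0) H10 ltac:(lia).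
  have Hy : (m (zp aG k * x)%g <= n)%N.
    have [e1 e2 e3 e4] := zpA_E k.
    rewrite /m val_mul /gmul !norm_abs mul00 mul10 e1 e2 e3 e4.
    rewrite /m in Hx; lia.
  have -> : x = ((zp aG k)^-1 * (zp aG k * x))%g by rewrite mulKg.
  apply: genG_mul; [apply: genG_inv; apply: zp_gen; apply: genG_in; by left | exact: IH].
- have Hz : val x i0 i0 != 0 by lia.
  have [k Hk] := red (x := val x i1 i0) Hz ltac:(lia).
  have Hy : (m (zp bG k * x)%g <= n)%N.
    have [e1 e2 e3 e4] := zpB_E k.
    rewrite /m val_mul /gmul !norm_abs mul00 mul10 e1 e2 e3 e4.
    have Hne : `|val x i1 i0| != `|val x i0 i0| by lia.
    rewrite /m in Hx; lia.
  have -> : x = ((zp bG k)^-1 * (zp bG k * x))%g by rewrite mulKg.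
  apply: genG_mul; [apply: genG_inv; apply: zp_gen; apply: genG_in; by right | exact: IH].
Qed.

Lemma val_expg (g : GG) k : val (g ^+ k)%g = iter k (gmul (val g)) gone.
Proof. elim: k => [//|k IH]; by rewrite expgS val_mul IH. Qed.

Lemma val_zp (g : GG) n : val (zp g n) = gpow (val g) n.
Proof.
case: n => k; first exact: val_expg.
by rewrite /zp -expVgn val_expg.
Qed.

Lemma Gam2_Gamma (y : GG) : Gam2 y -> Gamma 2 (val y).
Proof.
elim=> {y}.
- move=> _ [g [h ->]]; apply: gen_in; exists (val g), (val h); split; first exact: inGv.
  split; [exact: inGv | by []].
- exact: gen_one.
- by move=> x y _ Hx _ Hy; apply: gen_mul.
- by move=> x _ Hx; apply: gen_inv.
Qed.

Lemma Gam3_Gamma (y : GG) : Gam3 y -> lcs 2 (val y).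
Proof.
elim=> {y}.
- move=> _ [g [h [Hg ->]]]; apply: gen_in; exists (val g), (val h); split.
    exact: Gam2_Gamma.
  split; [exact: inGv | by []].
- exact: gen_one.
- by move=> x y _ Hx _ Hy; apply: gen_mul.
- by move=> x _ Hx; apply: gen_inv.
Qed.

Lemma Gam4_Gamma (y : GG) : Gam4 y -> Gamma 4 (val y).
Proof.
elim=> {y}.
- move=> _ [g [h [Hg ->]]]; apply: gen_in; exists (val g), (val h); split.
    exact: Gam3_Gamma.
  split; [exact: inGv | by []].
- exact: gen_one.
- by move=> x y _ Hx _ Hy; apply: gen_mul.
- by move=> x _ Hx; apply: gen_inv.
Qed.

Definition toGG (x : mat) (H : inG x) : GG := exist _ x (iffLR (inGP x) H).

Lemma Gamma2_Gam x : Gamma 2 x -> exists y : GG, val y = x /\ Gam2 y.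
Proof.
elim=> {x}.
- move=> _ [g [h [Hg [Hh ->]]]].
  exists (cm (toGG Hg) (toGG Hh)); split=> //; exact: Gam2_cm.
- by exists 1%g; split=> //; exact: genG_one.
- move=> x y _ [X [<- HX]] _ [Y [<- HY]]; exists (X * Y)%g; split=> //; exact: genG_mul.
- move=> x _ [X [<- HX]]; exists (X^-1)%g; split=> //; exact: genG_inv.
Qed.

Lemma eq3m_refl n u : eq3m n u u.
Proof. by []. Qed.

Definition psibm (psi : mat -> int * int * int) (x : mat) : int * int * int :=
  if insub x is Some y then psi (val (cx aG bG (fun z : GG => psi (val z)) y))
  else (0, 0, 0).

Lemma psibmE psi (y : GG) :
  psibm psi (val y) = psi (val (cx aG bG (fun z : GG => psi (val z)) y)).
Proof. by rewrite /psibm valK. Qed.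

Unset Implicit Arguments.

Theorem proposition7 (N : nat) (hN : (1 <= N)%N)
  (psi : mat -> int * int * int)
  (Hpsi_hom : forall x y, Gamma 2 x -> Gamma 2 y ->
       psi (gmul x y) = add3 (psi x) (psi y))
  (Hpsi_ker : forall x, Gamma 2 x -> (psi x = (0, 0, 0) <-> Gamma 4 x))
  (Hpsi_C : psi Cm = (0, 0, 1))
  (Hpsi_CA : psi (comm Cm Am) = (1, 0, 0))
  (Hpsi_CB : psi (comm Cm Bm) = (0, 1, 0))
  (phi1 : mat -> int * int)
  (Hphi1_hom : forall x y, inG x -> inG y ->
       eq2m N (phi1 (gmul x y)) (add2 (phi1 x) (phi1 y)))
  (Hphi1_A : eq2m N (phi1 Am) (1, 0))
  (Hphi1_B : eq2m N (phi1 Bm) (0, 1))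
  (phi2 : mat -> int)
  (Hphi2_hom : forall x y, PhiN N phi1 x -> PhiN N phi1 y ->
       eqm (Nprime N) (phi2 (gmul x y)) (phi2 x + phi2 y))
  (Hphi2_AN : eqm (Nprime N) (phi2 (gpow Am N%:Z)) 0)
  (Hphi2_BN : eqm (Nprime N) (phi2 (gpow Bm N%:Z)) 0)
  (Hphi2_C : forall i j : int,
       eqm (Nprime N)
         (phi2 (gmul (gmul (gmul (gpow Am i) (gpow Bm j)) Cm)
                     (gmul (gpow Bm (- j)) (gpow Am (- i))))) 1) :
  exists psib : mat -> int * int * int,
    (forall x y, PhiN N phi1 x -> PhiN N phi1 y ->
       eq3m (Nprime N) (psib (gmul x y)) (add3 (psib x) (psib y))) /\
    (forall x, Gamma 2 x -> eq3m (Nprime N) (psib x) (psi x)) /\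
    eq3m (Nprime N) (psib (gpow Am N%:Z)) (0, 0, 0) /\
    eq3m (Nprime N) (psib (gpow Bm N%:Z)) (0, 0, 0) /\
    (forall g d, inG g -> PhiN N phi1 d ->
       eq3m (Nprime N) (psib (gmul (gmul g d) (ginv g)))
         (add3 (- ((phi1 g).1 * phi2 d), - ((phi1 g).2 * phi2 d), 0) (psib d))) /\
    (forall i j k : int,
       eq3m (Nprime N)
         (psib (gmul (gmul (gmul (gpow Am i) (gpow Bm j)) (gpow Cm k))
                     (gmul (gpow Bm (- j)) (gpow Am (- i)))))
         (- (i * k), - (j * k), k)).
Proof.
pose psi' := fun z : GG => psi (val z).
pose phi1' := fun z : GG => phi1 (val z).
pose phi2' := fun z : GG => phi2 (val z).
have Hgen := gen_all.
have Hhom : forall x y : GG, Gam2 x -> Gam2 y -> psi' (x * y)%g = add3 (psi' x) (psi' y).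
  by move=> x y Hx Hy; apply: Hpsi_hom; apply: Gam2_Gamma.
have Hker : forall x : GG, Gam4 x -> psi' x = (0, 0, 0).
  move=> x Hx; apply/(Hpsi_ker _ (Gam2_Gamma (Gam32 (Gam43 Hx)))).
  exact: Gam4_Gamma.
have HC : psi' (C aG bG) = (0, 0, 1) by [].
have HCA : psi' (cm (C aG bG) aG) = (1, 0, 0) by [].
have HCB : psi' (cm (C aG bG) bG) = (0, 1, 0) by [].
have Hphi1 : forall x y : GG, eq2m N (phi1' (x * y)%g) (add2 (phi1' x) (phi1' y)).
  by move=> x y; apply: Hphi1_hom; exact: inGv.
have Hphi1A : eq2m N (phi1' aG) (1, 0) by [].
have Hphi1B : eq2m N (phi1' bG) (0, 1) by [].
have HPhi : forall x : GG, PhiG N phi1' x <-> PhiN N phi1 (val x).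
  by move=> x; split=> [H|[_ H]] //; split=> //; exact: inGv.
have Hphi2 : forall x y : GG, PhiG N phi1' x -> PhiG N phi1' y ->
    eqm (Nprime N) (phi2' (x * y)%g) (phi2' x + phi2' y).
  by move=> x y /HPhi Hx /HPhi Hy; apply: Hphi2_hom.
have Hphi2A : eqm (Nprime N) (phi2' (zp aG (Posz N))) 0.
  by rewrite /phi2' val_zp.
have Hphi2B : eqm (Nprime N) (phi2' (zp bG (Posz N))) 0.
  by rewrite /phi2' val_zp.
have Hphi2C : forall i j : int, eqm (Nprime N)
    (phi2' (zp aG i * zp bG j * C aG bG * (zp bG (- j) * zp aG (- i)))%g) 1.
  by move=> i j; rewrite /phi2' !val_mul !val_zp; exact: Hphi2_C.
exists (psibm psi); split; [|split; [|split; [|split; [|split]]]].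
- move=> x y Hx Hy.
  have [X EX] : exists X : GG, x = val X by exists (toGG Hx.1).
  subst x.
  have [Y EY] : exists Y : GG, y = val Y by exists (toGG Hy.1).
  subst y.
  rewrite -val_mul !psibmE.
  exact: (psib_mul Hgen Hhom Hker HC HCA HCB hN Hphi1 Hphi1A Hphi1B
            ((HPhi X).2 Hx) ((HPhi Y).2 Hy)).
- move=> x /Gamma2_Gam [X [<- HX]].
  have E := psib_Gam2 Hgen Hhom Hker HC HCA HCB HX; rewrite /psi' in E.
  rewrite psibmE E; exact: eq3m_refl.
- have E := psib_zaN Hgen Hhom Hker HC HCA HCB hN; rewrite /psi' in E.
  rewrite -(val_zp aG) psibmE E; exact: eq3m_refl.
- have E := psib_zbN Hgen Hhom Hker HC HCA HCB hN; rewrite /psi' in E.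
  rewrite -(val_zp bG) psibmE E; exact: eq3m_refl.
- move=> g d Hg Hd.
  have [G' EG] : exists G' : GG, g = val G' by exists (toGG Hg).
  subst g.
  have [D ED] : exists D : GG, d = val D by exists (toGG Hd.1).
  subst d.
  rewrite -val_inv -!val_mul !psibmE.
  exact: (psib_conj Hgen Hhom Hker HC HCA HCB hN Hphi1 Hphi1A Hphi1B
            Hphi2 Hphi2A Hphi2B Hphi2C G' ((HPhi D).2 Hd)).
- move=> i j k.
  have -> : gmul (gmul (gmul (gpow Am i) (gpow Bm j)) (gpow Cm k))
                     (gmul (gpow Bm (- j)) (gpow Am (- i))) =
            val (zp aG i * zp bG j * zp (C aG bG) k * (zp bG (- j) * zp aG (- i)))%g.
    by rewrite !val_mul !val_zp.
  have E := psib_P5 Hgen Hhom Hker HC HCA HCB hN i j k; rewrite /psi' in E.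
  rewrite psibmE E; exact: eq3m_refl.
Qed.
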